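(* Let $(F,\phi):\mathcal A\to\mathcal B$, $(K,\kappa):\mathcal A\to\mathcal D$, $(G,\gamma):\mathcal B\to\mathcal C$, $(H,\eta):\mathcal D\to\mathcal C$ be morphisms of bigroupoids with $(G,\gamma)\circ(F,\phi)=(H,\eta)\circ(K,\kappa)$, where $K$ is a trivial cofibration which is surjective on 0-cells and $G$ is a fibration. Then there is a morphism $(L,\lambda):\mathcal D\to\mathcal B$ with $(L,\lambda)\circ(K,\kappa)=(F,\phi)$ and $(G,\gamma)\circ(L,\lambda)=(H,\eta)$.
   Context: A bigroupoid $\mathcal B$ consists of: a set $\mathcal B_0$ of 0-cells; for each $A,B\in\mathcal B_0$ a groupoid $\mathcal B(A,B)$ whose objects are 1-cells and whose arrows are 2-cells; composition functors $*$; identity 1-cells $1_A$; inversion functors $(-)^*$; and natural isomorphisms $\mathbf a:(h*g)*f\Rightarrow h*(g*f)$, $\mathbf l:1_B*f\Rightarrow f$, $\mathbf r:f*1_A\Rightarrow f$, $\mathbf e:f^**f\Rightarrow 1_A$, $\mathbf i:1_B\Rightarrow f*f^*$, such that the pentagon for $\mathbf a$ commutes, $(\mathrm{id}*\mathbf l)\circ\mathbf a=\mathbf r*\mathrm{id}$, and $\mathbf r_f\circ(\mathrm{id}*\mathbf e_f)\circ\mathbf a\circ(\mathbf i_f*\mathrm{id})=\mathbf l_f$. A morphism $(F,\phi):\mathcal A\to\mathcal B$ consists of a function on 0-cells, functors $F_{A,A'}:\mathcal A(A,A')\to\mathcal B(FA,FA')$ and natural isomorphisms $\phi_{g,f}:Fg*Ff\Rightarrow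 F(g*f)$, $\phi_A:1_{FA}\Rightarrow F1_A$, $\phi_f:(Ff)^*\Rightarrow F(f^* )$ satisfying $F\mathbf a\circ\phi\circ(\phi*\mathrm{id})=\phi\circ(\mathrm{id}*\phi)\circ\mathbf a$, $F\mathbf r\circ\phi\circ(\mathrm{id}*\phi_A)=\mathbf r$, $F\mathbf l\circ\phi\circ(\phi_B*\mathrm{id})=\mathbf l$, $F\mathbf e\circ\phi\circ(\phi_f*\mathrm{id})=\phi_A\circ\mathbf e$, $F\mathbf i\circ\phi_B=\phi\circ(\mathrm{id}*\phi_f)\circ\mathbf i$; composition is $(G,\gamma)\circ(F,\phi)=(GF,G\phi\circ\gamma F)$. Fibration: (1) for every 0-cell $A'$ of $\mathcal A$ and 1-cell $b:B\to FA'$ there is $a:A\to A'$ with $FA=B$, $Fa=b$; (2) for every 1-cell $a'$ and 2-cell $\beta:b\Rightarrow Fa'$ there is $\alpha:a\Rightarrow a'$ with $Fa=b$, $F\alpha=\beta$. Cofibration: injective on 0-cells and each $F_{A,A'}$ injective on objects. Weak equivalence: every 0-cell $B$ of the codomain admits a 1-cell $B\to FA'$ for some 0-cell $A'$, and each $F_{A,A'}$ is an equivalence of categories. A trivial cofibration is a cofibration that is a weak equivalence. *)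

(* Defs.v *)
Set Implicit Arguments.
Unset Strict Implicit.

Record BgData := {
  obj : Type;
  hom : obj -> obj -> Type;
  cell : forall A B : obj, hom A B -> hom A B -> Type;
  vcomp : forall (A B : obj) (f g h : hom A B),
            cell g h -> cell f g -> cell f h;
  id2 : forall (A B : obj) (f : hom A B), cell f f;
  inv2 : forall (A B : obj) (f g : hom A B), cell f g -> cell g f;
  comp1 : forall A B C : obj, hom B C -> hom A B -> hom A C;
  comp2 : forall (A B C : obj) (g g' : hom B C) (f f' : hom A B),
            cell g g' -> cell f f' -> cell (comp1 g f) (comp1 g' f');
  id1 : forall A : obj, hom A A;
  rev1 : forall A B : obj, hom A B -> hom B A;
  rev2 : forall (A B : obj) (f f' : hom A B),
            cell f f' -> cell (rev1 f) (rev1 f');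
  assoc : forall (A B C D : obj) (h : hom C D) (g : hom B C) (f : hom A B),
            cell (comp1 (comp1 h g) f) (comp1 h (comp1 g f));
  lu : forall (A B : obj) (f : hom A B), cell (comp1 (id1 B) f) f;
  ru : forall (A B : obj) (f : hom A B), cell (comp1 f (id1 A)) f;
  ev : forall (A B : obj) (f : hom A B), cell (comp1 (rev1 f) f) (id1 A);
  coev : forall (A B : obj) (f : hom A B), cell (id1 B) (comp1 f (rev1 f))
}.

Arguments hom {b} _ _.
Arguments cell {b A B} _ _.
Arguments vcomp {b A B f g h} _ _.
Arguments id2 {b A B} _.
Arguments inv2 {b A B f g} _.
Arguments comp1 {b A B C} _ _.
Arguments comp2 {b A B C g g' f f'} _ _.
Arguments id1 {b} _.
Arguments rev1 {b A B} _.
Arguments rev2 {b A B f f'} _.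
Arguments assoc {b A B C D} _ _ _.
Arguments lu {b A B} _.
Arguments ru {b A B} _.
Arguments ev {b A B} _.
Arguments coev {b A B} _.

Record BgAxioms (B : BgData) : Prop := {
  ax_vassoc : forall (X Y : obj B) (f g h k : hom X Y)
      (a : cell f g) (b : cell g h) (c : cell h k),
      vcomp c (vcomp b a) = vcomp (vcomp c b) a;
  ax_vid_l : forall (X Y : obj B) (f g : hom X Y) (a : cell f g), vcomp (id2 g) a = a;
  ax_vid_r : forall (X Y : obj B) (f g : hom X Y) (a : cell f g), vcomp a (id2 f) = a;
  ax_inv_l : forall (X Y : obj B) (f g : hom X Y) (a : cell f g), vcomp (inv2 a) a = id2 f;
  ax_inv_r : forall (X Y : obj B) (f g : hom X Y) (a : cell f g), vcomp a (inv2 a) = id2 g;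
  ax_comp2_id : forall (X Y Z : obj B) (g : hom Y Z) (f : hom X Y),
      comp2 (id2 g) (id2 f) = id2 (comp1 g f);
  ax_comp2_v : forall (X Y Z : obj B) (g g' g'' : hom Y Z) (f f' f'' : hom X Y)
      (b : cell g g') (b' : cell g' g'') (a : cell f f') (a' : cell f' f''),
      comp2 (vcomp b' b) (vcomp a' a) = vcomp (comp2 b' a') (comp2 b a);
  ax_rev2_id : forall (X Y : obj B) (f : hom X Y), rev2 (id2 f) = id2 (rev1 f);
  ax_rev2_v : forall (X Y : obj B) (f f' f'' : hom X Y) (a : cell f f') (a' : cell f' f''),
      rev2 (vcomp a' a) = vcomp (rev2 a') (rev2 a);
  ax_assoc_nat : forall (W X Y Z : obj B) (h h' : hom Y Z) (g g' : hom X Y) (f f' : hom W X)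
      (c : cell h h') (b : cell g g') (a : cell f f'),
      vcomp (assoc h' g' f') (comp2 (comp2 c b) a) = vcomp (comp2 c (comp2 b a)) (assoc h g f);
  ax_lu_nat : forall (X Y : obj B) (f f' : hom X Y) (a : cell f f'),
      vcomp a (lu f) = vcomp (lu f') (comp2 (id2 (id1 Y)) a);
  ax_ru_nat : forall (X Y : obj B) (f f' : hom X Y) (a : cell f f'),
      vcomp a (ru f) = vcomp (ru f') (comp2 a (id2 (id1 X)));
  ax_ev_nat : forall (X Y : obj B) (f f' : hom X Y) (a : cell f f'),
      vcomp (id2 (id1 X)) (ev f) = vcomp (ev f') (comp2 (rev2 a) a);
  ax_coev_nat : forall (X Y : obj B) (f f' : hom X Y) (a : cell f f'),
      vcomp (comp2 a (rev2 a)) (coev f) = vcomp (coev f') (id2 (id1 Y));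
  ax_pentagon : forall (V W X Y Z : obj B) (k : hom Y Z) (h : hom X Y) (g : hom W X) (f : hom V W),
      vcomp (assoc k h (comp1 g f)) (assoc (comp1 k h) g f)
      = vcomp (comp2 (id2 k) (assoc h g f))
              (vcomp (assoc k (comp1 h g) f) (comp2 (assoc k h g) (id2 f)));
  ax_triangle : forall (X Y Z : obj B) (g : hom Y Z) (f : hom X Y),
      vcomp (comp2 (id2 g) (lu f)) (assoc g (id1 Y) f) = comp2 (ru g) (id2 f);
  ax_inverse : forall (X Y : obj B) (f : hom X Y),
      vcomp (ru f) (vcomp (comp2 (id2 f) (ev f))
                          (vcomp (assoc f (rev1 f) f) (comp2 (coev f) (id2 f))))
      = lu f
}.

Record Bigroupoid := { bg_data :> BgData; bg_ax : BgAxioms bg_data }.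

Record MorData (A B : BgData) := {
  m0 : obj A -> obj B;
  m1 : forall X Y : obj A, hom X Y -> hom (m0 X) (m0 Y);
  m2 : forall (X Y : obj A) (f g : hom X Y), cell f g -> cell (m1 f) (m1 g);
  mphi : forall (X Y Z : obj A) (g : hom Y Z) (f : hom X Y),
           cell (comp1 (m1 g) (m1 f)) (m1 (comp1 g f));
  mphi0 : forall X : obj A, cell (id1 (m0 X)) (m1 (id1 X));
  mphiinv : forall (X Y : obj A) (f : hom X Y), cell (rev1 (m1 f)) (m1 (rev1 f))
}.

Arguments m0 {A B} _ _.
Arguments m1 {A B} _ {X Y} _.
Arguments m2 {A B} _ {X Y f g} _.
Arguments mphi {A B} _ {X Y Z} _ _.
Arguments mphi0 {A B} _ _.
Arguments mphiinv {A B} _ {X Y} _.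

Definition is_morphism (A B : BgData) (F : MorData A B) : Prop :=
  (forall (X Y : obj A) (f : hom X Y), m2 F (id2 f) = id2 (m1 F f)) /\
  (forall (X Y : obj A) (f g h : hom X Y) (a : cell f g) (b : cell g h),
      m2 F (vcomp b a) = vcomp (m2 F b) (m2 F a)) /\
  (forall (X Y Z : obj A) (g g' : hom Y Z) (f f' : hom X Y) (b : cell g g') (a : cell f f'),
      vcomp (m2 F (comp2 b a)) (mphi F g f) = vcomp (mphi F g' f') (comp2 (m2 F b) (m2 F a))) /\
  (forall (X Y : obj A) (f f' : hom X Y) (a : cell f f'),
      vcomp (m2 F (rev2 a)) (mphiinv F f) = vcomp (mphiinv F f') (rev2 (m2 F a))) /\
  (forall (W X Y Z : obj A) (h : hom Y Z) (g : hom X Y) (f : hom W X),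
      vcomp (m2 F (assoc h g f)) (vcomp (mphi F (comp1 h g) f) (comp2 (mphi F h g) (id2 (m1 F f))))
      = vcomp (mphi F h (comp1 g f)) (vcomp (comp2 (id2 (m1 F h)) (mphi F g f))
                                            (assoc (m1 F h) (m1 F g) (m1 F f)))) /\
  (forall (X Y : obj A) (f : hom X Y),
      vcomp (m2 F (ru f)) (vcomp (mphi F f (id1 X)) (comp2 (id2 (m1 F f)) (mphi0 F X)))
      = ru (m1 F f)) /\
  (forall (X Y : obj A) (f : hom X Y),
      vcomp (m2 F (lu f)) (vcomp (mphi F (id1 Y) f) (comp2 (mphi0 F Y) (id2 (m1 F f))))
      = lu (m1 F f)) /\
  (forall (X Y : obj A) (f : hom X Y),
      vcomp (m2 F (ev f)) (vcomp (mphi F (rev1 f) f) (comp2 (mphiinv F f) (id2 (m1 F f))))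
      = vcomp (mphi0 F X) (ev (m1 F f))) /\
  (forall (X Y : obj A) (f : hom X Y),
      vcomp (m2 F (coev f)) (mphi0 F Y)
      = vcomp (mphi F f (rev1 f)) (vcomp (comp2 (id2 (m1 F f)) (mphiinv F f)) (coev (m1 F f)))).

Definition mcomp (A B C : BgData) (G : MorData B C) (F : MorData A B) : MorData A C :=
  {| m0 := fun X => m0 G (m0 F X);
     m1 := fun X Y f => m1 G (m1 F f);
     m2 := fun X Y f g a => m2 G (m2 F a);
     mphi := fun X Y Z g f => vcomp (m2 G (mphi F g f)) (mphi G (m1 F g) (m1 F f));
     mphi0 := fun X => vcomp (m2 G (mphi0 F X)) (mphi0 G (m0 F X));
     mphiinv := fun X Y f => vcomp (m2 G (mphiinv F f)) (mphiinv G (m1 F f)) |}.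

Definition is_fibration (A B : BgData) (F : MorData A B) : Prop :=
  (forall (A' : obj A) (Bo : obj B) (b : hom Bo (m0 F A')),
     exists (Ao : obj A) (a : hom Ao A'),
       existT (fun X : obj B => hom X (m0 F A')) (m0 F Ao) (m1 F a)
       = existT (fun X : obj B => hom X (m0 F A')) Bo b) /\
  (forall (X Y : obj A) (a' : hom X Y) (b : hom (m0 F X) (m0 F Y)) (beta : cell b (m1 F a')),
     exists (a : hom X Y) (alpha : cell a a'),
       existT (fun x => cell x (m1 F a')) (m1 F a) (m2 F alpha)
       = existT (fun x => cell x (m1 F a')) b beta).

Definition is_cofibration (A B : BgData) (F : MorData A B) : Prop :=
  (forall X Y : obj A, m0 F X = m0 F Y -> X = Y) /\
  (forall (X Y : obj A) (f g : hom X Y), m1 F f = m1 F g -> f = g).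

(* Equivalence of categories (groupoids) between A(X,Y) and B(FX,FY): a functor
   back together with natural isomorphisms (every 2-cell is invertible). *)
Definition is_equiv_hom (A B : BgData) (F : MorData A B) (X Y : obj A) : Prop :=
  exists (G1 : hom (m0 F X) (m0 F Y) -> hom X Y)
         (G2 : forall b b' : hom (m0 F X) (m0 F Y), cell b b' -> cell (G1 b) (G1 b'))
         (eta : forall a : hom X Y, cell a (G1 (m1 F a)))
         (eps : forall b : hom (m0 F X) (m0 F Y), cell (m1 F (G1 b)) b),
    (forall b, G2 b b (id2 b) = id2 (G1 b)) /\
    (forall b b' b'' (u : cell b b') (v : cell b' b''),
        G2 b b'' (vcomp v u) = vcomp (G2 b' b'' v) (G2 b b' u)) /\
    (forall (a a' : hom X Y) (u : cell a a'),
        vcomp (eta a') u = vcomp (G2 _ _ (m2 F u)) (eta a)) /\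
    (forall (b b' : hom (m0 F X) (m0 F Y)) (v : cell b b'),
        vcomp (eps b') (m2 F (G2 b b' v)) = vcomp v (eps b)).

Definition is_weak_equivalence (A B : BgData) (F : MorData A B) : Prop :=
  (forall Bo : obj B, exists A' : obj A, inhabited (hom Bo (m0 F A'))) /\
  (forall X Y : obj A, is_equiv_hom F X Y).

Definition is_trivial_cofibration (A B : BgData) (F : MorData A B) : Prop :=
  is_cofibration F /\ is_weak_equivalence F.

Definition surjective_on_0cells (A B : BgData) (F : MorData A B) : Prop :=
  forall Bo : obj B, exists Ao : obj A, m0 F Ao = Bo.

(* Main.v *)
Require Import Defs.
From Stdlib Require Import FunctionalExtensionality Eqdep ClassicalEpsilon Classical ProofIrrelevance.

Section Gpd.
Context {B : BgData} (HB : BgAxioms B).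

Lemma vassoc {X Y : obj B} {f g h k : hom X Y} (a : cell f g) (b : cell g h) (c : cell h k) :
  vcomp c (vcomp b a) = vcomp (vcomp c b) a.
Proof. apply (ax_vassoc HB). Qed.
Lemma vidl {X Y : obj B} {f g : hom X Y} (a : cell f g) : vcomp (id2 g) a = a.
Proof. apply (ax_vid_l HB). Qed.
Lemma vidr {X Y : obj B} {f g : hom X Y} (a : cell f g) : vcomp a (id2 f) = a.
Proof. apply (ax_vid_r HB). Qed.
Lemma vinvl {X Y : obj B} {f g : hom X Y} (a : cell f g) : vcomp (inv2 a) a = id2 f.
Proof. apply (ax_inv_l HB). Qed.
Lemma vinvr {X Y : obj B} {f g : hom X Y} (a : cell f g) : vcomp a (inv2 a) = id2 g.
Proof. apply (ax_inv_r HB). Qed.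
Lemma c2id {X Y Z : obj B} {g : hom Y Z} {f : hom X Y} : comp2 (id2 g) (id2 f) = id2 (comp1 g f).
Proof. apply (ax_comp2_id HB). Qed.
Lemma c2v {X Y Z : obj B} {g g' g'' : hom Y Z} {f f' f'' : hom X Y}
      (b : cell g g') (b' : cell g' g'') (a : cell f f') (a' : cell f' f'') :
      comp2 (vcomp b' b) (vcomp a' a) = vcomp (comp2 b' a') (comp2 b a).
Proof. apply (ax_comp2_v HB). Qed.
Lemma r2id {X Y : obj B} {f : hom X Y} : rev2 (id2 f) = id2 (rev1 f).
Proof. apply (ax_rev2_id HB). Qed.
Lemma r2v {X Y : obj B} {f f' f'' : hom X Y} (a : cell f f') (a' : cell f' f'') :
      rev2 (vcomp a' a) = vcomp (rev2 a') (rev2 a).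
Proof. apply (ax_rev2_v HB). Qed.

Lemma vcancl {X Y : obj B} {f g h : hom X Y} (a : cell f g) (x y : cell h f) :
  vcomp a x = vcomp a y -> x = y.
Proof.
  intro E. rewrite <- (vidl x), <- (vidl y), <- (vinvl a), <- !vassoc, E. reflexivity.
Qed.
Lemma vcancr {X Y : obj B} {f g h : hom X Y} (a : cell f g) (x y : cell g h) :
  vcomp x a = vcomp y a -> x = y.
Proof.
  intro E. rewrite <- (vidr x), <- (vidr y), <- (vinvr a), !vassoc, E. reflexivity.
Qed.
Lemma inv_uniq {X Y : obj B} {f g : hom X Y} (a : cell f g) (b : cell g f) :
  vcomp b a = id2 f -> b = inv2 a.
Proof. intro E. apply (vcancr a). rewrite E, vinvl. reflexivity. Qed.
Lemma inv2_id {X Y : obj B} {f : hom X Y} : inv2 (id2 f) = id2 f.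
Proof. symmetry. apply inv_uniq. apply vidl. Qed.
Lemma inv2_inv {X Y : obj B} {f g : hom X Y} (a : cell f g) : inv2 (inv2 a) = a.
Proof. symmetry. apply inv_uniq. apply vinvr. Qed.
Lemma inv2_v {X Y : obj B} {f g h : hom X Y} (a : cell f g) (b : cell g h) :
  inv2 (vcomp b a) = vcomp (inv2 a) (inv2 b).
Proof. symmetry. apply inv_uniq. rewrite <- !vassoc, (vassoc a), vinvl, vidl, vinvl. reflexivity. Qed.
Lemma vKl {X Y : obj B} {f g h : hom X Y} (a : cell f g) (x : cell h f) :
  vcomp (inv2 a) (vcomp a x) = x.
Proof. rewrite vassoc, vinvl, vidl. reflexivity. Qed.
Lemma vKr {X Y : obj B} {f g h : hom X Y} (a : cell g f) (x : cell h f) :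
  vcomp a (vcomp (inv2 a) x) = x.
Proof. rewrite vassoc, vinvr, vidl. reflexivity. Qed.
Lemma c2inv {X Y Z : obj B} {g g' : hom Y Z} {f f' : hom X Y} (b : cell g g') (a : cell f f') :
  comp2 (inv2 b) (inv2 a) = inv2 (comp2 b a).
Proof. apply inv_uniq. rewrite <- c2v, !vinvl, c2id. reflexivity. Qed.
Lemma r2inv {X Y : obj B} {f f' : hom X Y} (a : cell f f') : rev2 (inv2 a) = inv2 (rev2 a).
Proof. apply inv_uniq. rewrite <- r2v, vinvl, r2id. reflexivity. Qed.
Lemma mvl {X Y : obj B} {f g h : hom X Y} (a : cell f g) (x : cell h f) (y : cell h g) :
  x = vcomp (inv2 a) y -> vcomp a x = y.
Proof. intro E. rewrite E. apply vKr. Qed.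
Lemma mvr {X Y : obj B} {f g h : hom X Y} (a : cell f g) (x : cell g h) (y : cell f h) :
  x = vcomp y (inv2 a) -> vcomp x a = y.
Proof. intro E. rewrite E, <- vassoc, vinvl, vidr. reflexivity. Qed.
Lemma c2idv {X Y Z : obj B} {g : hom Y Z} {f f' f'' : hom X Y} (a : cell f f') (a' : cell f' f'') :
  comp2 (id2 g) (vcomp a' a) = vcomp (comp2 (id2 g) a') (comp2 (id2 g) a).
Proof. rewrite <- c2v, vidl. reflexivity. Qed.
Lemma c2vid {X Y Z : obj B} {g g' g'' : hom Y Z} {f : hom X Y} (b : cell g g') (b' : cell g' g'') :
  comp2 (vcomp b' b) (id2 f) = vcomp (comp2 b' (id2 f)) (comp2 b (id2 f)).
Proof. rewrite <- c2v, vidl. reflexivity. Qed.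
Lemma c2split {X Y Z : obj B} {g g' : hom Y Z} {f f' : hom X Y} (b : cell g g') (a : cell f f') :
  comp2 b a = vcomp (comp2 b (id2 f')) (comp2 (id2 g) a).
Proof. rewrite <- c2v, vidl, vidr. reflexivity. Qed.
Lemma c2split' {X Y Z : obj B} {g g' : hom Y Z} {f f' : hom X Y} (b : cell g g') (a : cell f f') :
  comp2 b a = vcomp (comp2 (id2 g') a) (comp2 b (id2 f)).
Proof. rewrite <- c2v, vidl, vidr. reflexivity. Qed.
Lemma c2vl {X Y Z : obj B} {g g' g'' : hom Y Z} {f f' : hom X Y} (b : cell g g') (b' : cell g' g'') (a : cell f f') :
  comp2 (vcomp b' b) a = vcomp (comp2 b' (id2 f')) (comp2 b a).
Proof. rewrite <- c2v, vidl. reflexivity. Qed.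
Lemma c2vr {X Y Z : obj B} {g g' : hom Y Z} {f f' f'' : hom X Y} (b : cell g g') (a : cell f f') (a' : cell f' f'') :
  comp2 b (vcomp a' a) = vcomp (comp2 (id2 g') a') (comp2 b a).
Proof. rewrite <- c2v, vidl. reflexivity. Qed.
Lemma anat {W X Y Z : obj B} {h h' : hom Y Z} {g g' : hom X Y} {f f' : hom W X}
      (c : cell h h') (b : cell g g') (a : cell f f') :
      vcomp (assoc h' g' f') (comp2 (comp2 c b) a) = vcomp (comp2 c (comp2 b a)) (assoc h g f).
Proof. apply (ax_assoc_nat HB). Qed.
Lemma lunat {X Y : obj B} {f f' : hom X Y} (a : cell f f') :
      vcomp a (lu f) = vcomp (lu f') (comp2 (id2 (id1 Y)) a).
Proof. apply (ax_lu_nat HB). Qed.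
Lemma runat {X Y : obj B} {f f' : hom X Y} (a : cell f f') :
      vcomp a (ru f) = vcomp (ru f') (comp2 a (id2 (id1 X))).
Proof. apply (ax_ru_nat HB). Qed.
Lemma evnat {X Y : obj B} {f f' : hom X Y} (a : cell f f') :
      ev f = vcomp (ev f') (comp2 (rev2 a) a).
Proof. rewrite <- (ax_ev_nat HB a), vidl. reflexivity. Qed.
Lemma coevnat {X Y : obj B} {f f' : hom X Y} (a : cell f f') :
      vcomp (comp2 a (rev2 a)) (coev f) = coev f'.
Proof. rewrite (ax_coev_nat HB a), vidr. reflexivity. Qed.
Lemma c2vl' {X Y Z : obj B} {g g' g'' : hom Y Z} {f f' : hom X Y} (b : cell g g') (b' : cell g' g'') (a : cell f f') :
  comp2 (vcomp b' b) a = vcomp (comp2 b' a) (comp2 b (id2 f)).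
Proof. rewrite <- c2v, vidr. reflexivity. Qed.
Lemma c2vr' {X Y Z : obj B} {g g' : hom Y Z} {f f' f'' : hom X Y} (b : cell g g') (a : cell f f') (a' : cell f' f'') :
  comp2 b (vcomp a' a) = vcomp (comp2 b a') (comp2 (id2 g) a).
Proof. rewrite <- c2v, vidr. reflexivity. Qed.
Lemma c2invl {X Y Z : obj B} {g g' : hom Y Z} {f : hom X Y} (b : cell g g') :
  inv2 (comp2 b (id2 f)) = comp2 (inv2 b) (id2 f).
Proof. rewrite <- c2inv, inv2_id. reflexivity. Qed.
Lemma c2invr {X Y Z : obj B} {g : hom Y Z} {f f' : hom X Y} (a : cell f f') :
  inv2 (comp2 (id2 g) a) = comp2 (id2 g) (inv2 a).
Proof. rewrite <- c2inv, inv2_id. reflexivity. Qed.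
End Gpd.

Definition P2 (B : BgData) := {XY : obj B * obj B &
   {fg : hom (fst XY) (snd XY) * hom (fst XY) (snd XY) & cell (fst fg) (snd fg)}}.
Definition pk {B : BgData} {X Y : obj B} {f g : hom X Y} (a : cell f g) : P2 B :=
  existT _ (X, Y) (existT (fun fg : hom X Y * hom X Y => cell (fst fg) (snd fg)) (f, g) a).
Definition P1 (B : BgData) := {XY : obj B * obj B & hom (fst XY) (snd XY)}.
Definition pk1 {B : BgData} {X Y : obj B} (f : hom X Y) : P1 B := existT _ (X, Y) f.

Ltac pkinv H :=
  let H1 := fresh "H1" in
  pose proof (f_equal (@projT1 _ _) H) as H1; simpl in H1; try (injection H1; intros; subst); clear H1;
  apply inj_pair2 in H;
  pose proof (f_equal (@projT1 _ _) H) as H1; simpl in H1; try (injection H1; intros; subst); clear H1;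
  apply inj_pair2 in H; subst.

Ltac pk1inv H :=
  let H1 := fresh "H1" in
  pose proof (f_equal (@projT1 _ _) H) as H1; simpl in H1; try (injection H1; intros; subst); clear H1;
  apply inj_pair2 in H; subst.

Section Pk.
Context {B : BgData}.
Lemma pk_v (X Y X' Y' : obj B) {f g h : hom X Y} (f' g' h' : hom X' Y')
  (a : cell f g) (b : cell g h) (a' : cell f' g') (b' : cell g' h') :
  pk a = pk a' -> pk b = pk b' -> pk (vcomp b a) = pk (vcomp b' a').
Proof. intros E1 E2. pkinv E1. pkinv E2. reflexivity. Qed.
Lemma pk_c2 (X Y Z X' Y' Z' : obj B) {g g' : hom Y Z} {f f' : hom X Y}
  (h h' : hom Y' Z') (k k' : hom X' Y') (b : cell g g') (a : cell f f') (b' : cell h h') (a' : cell k k') :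
  pk b = pk b' -> pk a = pk a' -> pk (comp2 b a) = pk (comp2 b' a').
Proof. intros E1 E2. pkinv E1. pkinv E2. reflexivity. Qed.
Lemma pk_inv2 (X Y X' Y' : obj B) {f g : hom X Y} (f' g' : hom X' Y') (a : cell f g) (a' : cell f' g') :
  pk a = pk a' -> pk (inv2 a) = pk (inv2 a').
Proof. intros E1. pkinv E1. reflexivity. Qed.
Lemma pk_rev2 (X Y X' Y' : obj B) {f g : hom X Y} (f' g' : hom X' Y') (a : cell f g) (a' : cell f' g') :
  pk a = pk a' -> pk (rev2 a) = pk (rev2 a').
Proof. intros E1. pkinv E1. reflexivity. Qed.
Lemma pk_sym (X Y X' Y' : obj B) {f g : hom X Y} (f' g' : hom X' Y') (a : cell f g) (a' : cell f' g') :
  pk a = pk a' -> pk a' = pk a.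
Proof. intros; symmetry; assumption. Qed.
End Pk.

Lemma pk_m2 (A B : BgData) (F : MorData A B) (X Y X' Y' : obj A) {f g : hom X Y} (f' g' : hom X' Y')
  (a : cell f g) (a' : cell f' g') : pk a = pk a' -> pk (m2 F a) = pk (m2 F a').
Proof. intros E1. pkinv E1. reflexivity. Qed.

Lemma vctx {B : BgData} {X Y : obj B} {f g : hom X Y} {l r : cell f g} (E : l = r) {h : hom X Y} (x : cell h f) :
  vcomp l x = vcomp r x.
Proof. rewrite E; reflexivity. Qed.

Ltac vnorm HB := repeat rewrite <- (vassoc HB).
Ltac vnormin HB H := repeat rewrite <- (vassoc HB) in H.
(* contextual rewrite with an equation between right-nested chains *)
Ltac rwc HB E :=
  first [ rewrite E
        | let H := fresh "Hc" in epose proof (vctx E _) as H; vnormin HB H; rewrite H; clear H ].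
Ltac rwcr HB E :=
  first [ rewrite <- E
        | let H := fresh "Hc" in epose proof (vctx (eq_sym E) _) as H; vnormin HB H; rewrite H; clear H ].

Section Mor.
Context {A B : BgData} (HA : BgAxioms A) (HB : BgAxioms B) {F : MorData A B} (HF : is_morphism F).

Lemma m2id {X Y : obj A} (f : hom X Y) : m2 F (id2 f) = id2 (m1 F f).
Proof. apply (proj1 HF). Qed.
Lemma m2v {X Y : obj A} {f g h : hom X Y} (a : cell f g) (b : cell g h) :
  m2 F (vcomp b a) = vcomp (m2 F b) (m2 F a).
Proof. apply (proj1 (proj2 HF)). Qed.
Lemma phinat {X Y Z : obj A} {g g' : hom Y Z} {f f' : hom X Y} (b : cell g g') (a : cell f f') :
  vcomp (m2 F (comp2 b a)) (mphi F g f) = vcomp (mphi F g' f') (comp2 (m2 F b) (m2 F a)).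
Proof. apply (proj1 (proj2 (proj2 HF))). Qed.
Lemma phiinvnat {X Y : obj A} {f f' : hom X Y} (a : cell f f') :
  vcomp (m2 F (rev2 a)) (mphiinv F f) = vcomp (mphiinv F f') (rev2 (m2 F a)).
Proof. apply (proj1 (proj2 (proj2 (proj2 HF)))). Qed.
Lemma passoc {W X Y Z : obj A} (h : hom Y Z) (g : hom X Y) (f : hom W X) :
  vcomp (m2 F (assoc h g f)) (vcomp (mphi F (comp1 h g) f) (comp2 (mphi F h g) (id2 (m1 F f))))
  = vcomp (mphi F h (comp1 g f)) (vcomp (comp2 (id2 (m1 F h)) (mphi F g f))
                                        (assoc (m1 F h) (m1 F g) (m1 F f))).
Proof. apply (proj1 (proj2 (proj2 (proj2 (proj2 HF))))). Qed.
Lemma pru {X Y : obj A} (f : hom X Y) :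
  vcomp (m2 F (ru f)) (vcomp (mphi F f (id1 X)) (comp2 (id2 (m1 F f)) (mphi0 F X))) = ru (m1 F f).
Proof. apply (proj1 (proj2 (proj2 (proj2 (proj2 (proj2 HF)))))). Qed.
Lemma plu {X Y : obj A} (f : hom X Y) :
  vcomp (m2 F (lu f)) (vcomp (mphi F (id1 Y) f) (comp2 (mphi0 F Y) (id2 (m1 F f)))) = lu (m1 F f).
Proof. apply (proj1 (proj2 (proj2 (proj2 (proj2 (proj2 (proj2 HF))))))). Qed.
Lemma pev {X Y : obj A} (f : hom X Y) :
  vcomp (m2 F (ev f)) (vcomp (mphi F (rev1 f) f) (comp2 (mphiinv F f) (id2 (m1 F f))))
  = vcomp (mphi0 F X) (ev (m1 F f)).
Proof. apply (proj1 (proj2 (proj2 (proj2 (proj2 (proj2 (proj2 (proj2 HF)))))))). Qed.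
Lemma pcoev {X Y : obj A} (f : hom X Y) :
  vcomp (m2 F (coev f)) (mphi0 F Y)
  = vcomp (mphi F f (rev1 f)) (vcomp (comp2 (id2 (m1 F f)) (mphiinv F f)) (coev (m1 F f))).
Proof. apply (proj2 (proj2 (proj2 (proj2 (proj2 (proj2 (proj2 (proj2 HF)))))))). Qed.
Lemma m2inv {X Y : obj A} {f g : hom X Y} (a : cell f g) : m2 F (inv2 a) = inv2 (m2 F a).
Proof. apply inv_uniq; auto. rewrite <- m2v, vinvl, m2id; auto. Qed.
Lemma phinat_l {X Y Z : obj A} {g g' : hom Y Z} (f : hom X Y) (b : cell g g') :
  vcomp (mphi F g' f) (comp2 (m2 F b) (id2 (m1 F f))) = vcomp (m2 F (comp2 b (id2 f))) (mphi F g f).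
Proof. rewrite <- (m2id f), phinat. reflexivity. Qed.
Lemma phinat_r {X Y Z : obj A} (g : hom Y Z) {f f' : hom X Y} (a : cell f f') :
  vcomp (mphi F g f') (comp2 (id2 (m1 F g)) (m2 F a)) = vcomp (m2 F (comp2 (id2 g) a)) (mphi F g f).
Proof. rewrite <- (m2id g), phinat. reflexivity. Qed.
Lemma phinat' {X Y Z : obj A} {g g' : hom Y Z} {f f' : hom X Y} (b : cell g g') (a : cell f f') :
  vcomp (mphi F g' f') (comp2 (m2 F b) (m2 F a)) = vcomp (m2 F (comp2 b a)) (mphi F g f).
Proof. rewrite phinat. reflexivity. Qed.
Lemma phiinvnat' {X Y : obj A} {f f' : hom X Y} (a : cell f f') :
  vcomp (mphiinv F f') (rev2 (m2 F a)) = vcomp (m2 F (rev2 a)) (mphiinv F f).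
Proof. rewrite phiinvnat. reflexivity. Qed.
Lemma m2vs {X Y : obj A} {f g h : hom X Y} (a : cell f g) (b : cell g h) :
  vcomp (m2 F b) (m2 F a) = m2 F (vcomp b a).
Proof. rewrite m2v. reflexivity. Qed.
Lemma passoc' {W X Y Z : obj A} (h : hom Y Z) (g : hom X Y) (f : hom W X) :
  vcomp (assoc (m1 F h) (m1 F g) (m1 F f))
    (vcomp (comp2 (inv2 (mphi F h g)) (id2 (m1 F f))) (inv2 (mphi F (comp1 h g) f)))
  = vcomp (comp2 (id2 (m1 F h)) (inv2 (mphi F g f)))
      (vcomp (inv2 (mphi F h (comp1 g f))) (m2 F (assoc h g f))).
Proof.
  pose proof (f_equal inv2 (passoc h g f)) as H. rewrite !(inv2_v HB), (c2invl HB), (c2invr HB) in H.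
  apply (vcancr HB (inv2 (m2 F (assoc h g f)))). vnorm HB. rewrite (vinvr HB), (vidr HB).
  apply mvl; auto. vnormin HB H. rewrite <- H. reflexivity.
Qed.
Lemma pru' {X Y : obj A} (f : hom X Y) :
  m2 F (ru f) = vcomp (ru (m1 F f)) (vcomp (comp2 (id2 (m1 F f)) (inv2 (mphi0 F X))) (inv2 (mphi F f (id1 X)))).
Proof.
  rewrite <- (pru f). vnorm HB. rewrite <- (c2invr HB). rewrite (vKr HB). rewrite (vinvr HB), (vidr HB). reflexivity.
Qed.
Lemma plu' {X Y : obj A} (f : hom X Y) :
  m2 F (lu f) = vcomp (lu (m1 F f)) (vcomp (comp2 (inv2 (mphi0 F Y)) (id2 (m1 F f))) (inv2 (mphi F (id1 Y) f))).
Proof.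
  rewrite <- (plu f). vnorm HB. rewrite <- (c2invl HB). rewrite (vKr HB). rewrite (vinvr HB), (vidr HB). reflexivity.
Qed.
Lemma pev' {X Y : obj A} (f : hom X Y) :
  vcomp (inv2 (mphi0 F X)) (m2 F (ev f)) =
  vcomp (ev (m1 F f)) (vcomp (comp2 (inv2 (mphiinv F f)) (id2 (m1 F f))) (inv2 (mphi F (rev1 f) f))).
Proof.
  assert (H : m2 F (ev f) = vcomp (vcomp (mphi0 F X) (ev (m1 F f)))
                 (inv2 (vcomp (mphi F (rev1 f) f) (comp2 (mphiinv F f) (id2 (m1 F f)))))).
  { rewrite <- pev. rewrite <- (vassoc HB), (vinvr HB), (vidr HB). reflexivity. }
  rewrite H, (inv2_v HB), (c2invl HB). vnorm HB. rewrite (vKl HB). reflexivity.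
Qed.
Lemma pcoev' {X Y : obj A} (f : hom X Y) :
  vcomp (comp2 (id2 (m1 F f)) (inv2 (mphiinv F f))) (vcomp (inv2 (mphi F f (rev1 f))) (m2 F (coev f)))
  = vcomp (coev (m1 F f)) (inv2 (mphi0 F Y)).
Proof.
  apply (vcancr HB (mphi0 F Y)). vnorm HB. rewrite (vinvl HB), (vidr HB), pcoev.
  rewrite (vKl HB), <- (c2invr HB), (vKl HB). reflexivity.
Qed.
End Mor.
Ltac gmerge HB HG := first [ let H := fresh "Hc" in epose proof (vctx (m2vs HG _ _) _) as H; vnormin HB H; rewrite H; clear H
                          | rewrite (m2vs HG) ].

Section Comp.
Context {A B C : BgData} (HA : BgAxioms A) (HB : BgAxioms B) (HC : BgAxioms C)
  {F : MorData A B} {G : MorData B C} (HF : is_morphism F) (HG : is_morphism G).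

Lemma comp_morphism : is_morphism (mcomp G F).
Proof.
  unfold is_morphism; simpl. repeat split.
  - intros. rewrite (m2id HF), (m2id HG). reflexivity.
  - intros. rewrite (m2v HF), (m2v HG). reflexivity.
  - intros. rewrite (vassoc HC), <- (m2v HG), (phinat HF), (m2v HG), <- (vassoc HC), (phinat HG), (vassoc HC).
    reflexivity.
  - intros. rewrite (vassoc HC), <- (m2v HG), (phiinvnat HF), (m2v HG), <- (vassoc HC), (phiinvnat HG), (vassoc HC).
    reflexivity.
  - intros.
    rewrite (c2vid HC). rewrite ?(m2v HG). vnorm HC.
    rwc HC (phinat_l HG (m1 F f) (mphi F h g)).
    gmerge HC HG. gmerge HC HG. vnorm HB.
    rewrite (passoc HF). rewrite !(m2v HG). vnorm HC.
    rwc HC (passoc HG (m1 F h) (m1 F g) (m1 F f)).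
    rwcr HC (phinat_r HG (m1 F h) (mphi F g f)).
    rewrite (c2idv HC). vnorm HC. reflexivity.
  - intros. rewrite (c2idv HC). vnorm HC.
    rwc HC (phinat_r HG (m1 F f) (mphi0 F X)).
    gmerge HC HG. gmerge HC HG. vnorm HB. rewrite (pru HF). apply (pru HG).
  - intros. rewrite (c2vid HC). vnorm HC.
    rwc HC (phinat_l HG (m1 F f) (mphi0 F Y)).
    gmerge HC HG. gmerge HC HG. vnorm HB. rewrite (plu HF). apply (plu HG).
  - intros. rewrite (c2vid HC). vnorm HC.
    rwc HC (phinat_l HG (m1 F f) (mphiinv F f)).
    gmerge HC HG. gmerge HC HG. vnorm HB. rewrite (pev HF). rewrite (m2v HG). vnorm HC.
    rwc HC (pev HG (m1 F f)). vnorm HC. reflexivity.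
  - intros. rewrite (c2idv HC). vnorm HC.
    gmerge HC HG. rewrite (pcoev HF). rewrite !(m2v HG). vnorm HC.
    rwc HC (pcoev HG (m1 F f)). vnorm HC.
    rwcr HC (phinat_r HG (m1 F f) (mphiinv F f)). reflexivity.
Qed.
End Comp.

Lemma mor_eq_pk {A B : BgData} (r1 r2 : MorData A B)
  (e0 : forall X, m0 r1 X = m0 r2 X)
  (e1 : forall X Y (f : hom X Y), pk1 (m1 r1 f) = pk1 (m1 r2 f))
  (e2 : forall X Y (f g : hom X Y) (a : cell f g), pk (m2 r1 a) = pk (m2 r2 a))
  (e3 : forall X Y Z (g : hom Y Z) (f : hom X Y), pk (mphi r1 g f) = pk (mphi r2 g f))
  (e4 : forall X, pk (mphi0 r1 X) = pk (mphi0 r2 X))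
  (e5 : forall X Y (f : hom X Y), pk (mphiinv r1 f) = pk (mphiinv r2 f)) : r1 = r2.
Proof.
  destruct r1 as [f0 f1 f2 f3 f4 f5], r2 as [g0 g1 g2 g3 g4 g5]; simpl in *.
  assert (E : f0 = g0) by (apply functional_extensionality; auto). subst g0.
  assert (E : f1 = g1).
  { apply functional_extensionality_dep; intro X. apply functional_extensionality_dep; intro Y.
    apply functional_extensionality; intro f. specialize (e1 X Y f). unfold pk1 in e1.
    apply inj_pair2 in e1. exact e1. }
  subst g1.
  assert (E : f2 = g2).
  { do 4 (apply functional_extensionality_dep; intro).
    apply functional_extensionality_dep; intro a. specialize (e2 _ _ _ _ a). unfold pk in e2.
    apply inj_pair2 in e2. apply inj_pair2 in e2. exact e2. }
  subst g2.
  assert (E : f3 = g3).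
  { apply functional_extensionality_dep; intro X. apply functional_extensionality_dep; intro Y.
    apply functional_extensionality_dep; intro Z. apply functional_extensionality_dep; intro g.
    apply functional_extensionality_dep; intro a. specialize (e3 _ _ _ g a). unfold pk in e3.
    apply inj_pair2 in e3. apply inj_pair2 in e3. exact e3. }
  subst g3.
  assert (E : f4 = g4).
  { apply functional_extensionality_dep; intro X. specialize (e4 X). unfold pk in e4.
    apply inj_pair2 in e4. apply inj_pair2 in e4. exact e4. }
  subst g4.
  assert (E : f5 = g5).
  { do 2 (apply functional_extensionality_dep; intro).
    apply functional_extensionality_dep; intro a. specialize (e5 _ _ a). unfold pk in e5.
    apply inj_pair2 in e5. apply inj_pair2 in e5. exact e5. }
  subst g5. reflexivity.
Qed.

Lemma mcomp_assoc {A B C D : BgData} (HD : BgAxioms D) (F : MorData A B) (G : MorData B C) (H : MorData C D)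
  (HH : is_morphism H) : mcomp (mcomp H G) F = mcomp H (mcomp G F).
Proof.
  apply mor_eq_pk; simpl; intros; try reflexivity; apply f_equal;
  rewrite (m2v HH); rewrite (vassoc HD); reflexivity.
Qed.

Section Conj.
Context {D B : BgData} (HD : BgAxioms D) (HB : BgAxioms B) {M : MorData D B} (HM : is_morphism M).
Variable L1 : forall X Y : obj D, hom X Y -> hom (m0 M X) (m0 M Y).
Variable th : forall (X Y : obj D) (d : hom X Y), cell (L1 X Y d) (m1 M d).
Arguments L1 {X Y} _.
Arguments th {X Y} d.

Definition conjM : MorData D B :=
  {| m0 := m0 M;
     m1 := @L1;
     m2 := fun X Y f g a => vcomp (inv2 (th g)) (vcomp (m2 M a) (th f));
     mphi := fun X Y Z g f => vcomp (inv2 (th (comp1 g f))) (vcomp (mphi M g f) (comp2 (th g) (th f)));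
     mphi0 := fun X => vcomp (inv2 (th (id1 X))) (mphi0 M X);
     mphiinv := fun X Y f => vcomp (inv2 (th (rev1 f))) (vcomp (mphiinv M f) (rev2 (th f))) |}.

Lemma conj_morphism : is_morphism conjM.
Proof.
  unfold is_morphism; simpl. repeat split.
  - intros. rewrite (m2id HM), (vidl HB), (vinvl HB). reflexivity.
  - intros. rewrite (m2v HM). vnorm HB. rewrite (vKr HB). reflexivity.
  - intros. vnorm HB. rewrite <- (c2v HB), !(vKr HB), (c2v HB). vnorm HB.
    rwc HB (phinat HM b a). reflexivity.
  - intros. vnorm HB. rewrite <- (r2v HB), !(vKr HB), (r2v HB). vnorm HB.
    rwc HB (phiinvnat HM a). reflexivity.
  - intros. vnorm HB. rewrite (vKr HB).
    rewrite <- (c2v HB _ (th (comp1 h g))), (vKr HB), (vidr HB), (c2vl HB). vnorm HB.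
    rwcr HB open_constr:(c2v HB (id2 (L1 h)) (th h) _ _). rewrite (vKr HB), (vidr HB), (c2vr HB). vnorm HB.
    rwcr HB (anat HB (th h) (th g) (th f)). rwc HB (passoc HM h g f). vnorm HB. reflexivity.
  - intros. vnorm HB. rewrite (vKr HB).
    rwcr HB open_constr:(c2v HB (id2 (L1 f)) (th f) _ _). rewrite (vKr HB), (vidr HB), (c2split' HB).
    rwc HB (pru HM f). rwcr HB (runat HB (th f)). apply (vKl HB).
  - intros. vnorm HB. rewrite (vKr HB).
    rwcr HB open_constr:(c2v HB _ (th (id1 Y)) (id2 (L1 f)) (th f)). rewrite (vKr HB), (vidr HB), (c2split HB).
    rwc HB (plu HM f). rwcr HB (lunat HB (th f)). apply (vKl HB).
  - intros. vnorm HB. rewrite (vKr HB).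
    rwcr HB open_constr:(c2v HB _ (th (rev1 f)) (id2 (L1 f)) (th f)). rewrite (vKr HB), (vidr HB), (c2vl HB). vnorm HB.
    rwc HB (pev HM f). rewrite <- (evnat HB (th f)). reflexivity.
  - intros. vnorm HB. rewrite (vKr HB). rewrite (pcoev HM f).
    rwcr HB open_constr:(c2v HB (id2 (L1 f)) (th f) _ _). rewrite (vKr HB), (vidr HB), (c2vr HB). vnorm HB.
    rewrite (coevnat HB (th f)). reflexivity.
Qed.
End Conj.

Definition reidx (D : BgData) {T : Type} (k : T -> obj D) : BgData :=
  {| obj := T;
     hom := fun x y => hom (k x) (k y);
     cell := fun x y f g => @cell D (k x) (k y) f g;
     vcomp := fun x y f g h b a => vcomp b a;
     id2 := fun x y f => id2 f;
     inv2 := fun x y f g a => inv2 a;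
     comp1 := fun x y z g f => comp1 g f;
     comp2 := fun x y z g g' f f' b a => comp2 b a;
     id1 := fun x => id1 (k x);
     rev1 := fun x y f => rev1 f;
     rev2 := fun x y f f' a => rev2 a;
     assoc := fun w x y z h g f => assoc h g f;
     lu := fun x y f => lu f;
     ru := fun x y f => ru f;
     ev := fun x y f => ev f;
     coev := fun x y f => coev f |}.

Lemma reidx_ax (D : BgData) (HD : BgAxioms D) (T : Type) (k : T -> obj D) : BgAxioms (@reidx D T k).
Proof.
  destruct HD; constructor; simpl; intros; auto.
Qed.

Definition reK {A D : BgData} (K : MorData A D) : MorData A (@reidx D (obj A) (m0 K)) :=
  @Build_MorData A (@reidx D (obj A) (m0 K)) (fun x => x)
     (fun X Y f => m1 K f)
     (fun X Y f g a => m2 K a)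
     (fun X Y Z g f => mphi K g f)
     (fun X => mphi0 K X)
     (fun X Y f => mphiinv K f).

Lemma reK_morphism {A D : BgData} (K : MorData A D) : is_morphism K -> is_morphism (reK K).
Proof. intro H. exact H. Qed.

Record EqD {A D : BgData} (K : MorData A D) (x y : obj A) : Type := {
  G1 : hom (m0 K x) (m0 K y) -> hom x y;
  G2 : forall b b' : hom (m0 K x) (m0 K y), cell b b' -> cell (G1 b) (G1 b');
  eta : forall a : hom x y, cell a (G1 (m1 K a));
  eps : forall b : hom (m0 K x) (m0 K y), cell (m1 K (G1 b)) b;
  G2id : forall b, G2 b b (id2 b) = id2 (G1 b);
  G2v : forall b b' b'' (u : cell b b') (v : cell b' b''),
        G2 b b'' (vcomp v u) = vcomp (G2 b' b'' v) (G2 b b' u);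
  etanat : forall (a a' : hom x y) (u : cell a a'),
        vcomp (eta a') u = vcomp (G2 _ _ (m2 K u)) (eta a);
  epsnat : forall (b b' : hom (m0 K x) (m0 K y)) (v : cell b b'),
        vcomp (eps b') (m2 K (G2 b b' v)) = vcomp v (eps b) }.

Lemma get_EqD {A D : BgData} (K : MorData A D) (x y : obj A) : is_equiv_hom K x y -> EqD K x y.
Proof.
  intro H. apply constructive_indefinite_description in H. destruct H as [g1 H].
  apply constructive_indefinite_description in H. destruct H as [g2 H].
  apply constructive_indefinite_description in H. destruct H as [et H].
  apply constructive_indefinite_description in H. destruct H as [ep H].
  destruct H as [h1 [h2 [h3 h4]]].
  exact (@Build_EqD A D K x y g1 g2 et ep h1 h2 h3 h4).
Defined.
Arguments G1 {A D K x y} _ _.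
Arguments G2 {A D K x y} _ _ _ _.
Arguments eta {A D K x y} _ _.
Arguments eps {A D K x y} _ _.
Arguments G2id {A D K x y} _ _.
Arguments G2v {A D K x y} _ _ _ _ _ _.
Arguments etanat {A D K x y} _ _ _ _.
Arguments epsnat {A D K x y} _ _ _ _.

Section Kinv.
Context {A D : BgData} (HA : BgAxioms A) (HD : BgAxioms D) {K : MorData A D} (HK : is_morphism K)
  (E : forall x y, EqD K x y).

Definition ki1 {x y : obj A} (d : hom (m0 K x) (m0 K y)) : hom x y := G1 (E x y) d.
Definition ki2 {x y : obj A} {d d' : hom (m0 K x) (m0 K y)} (u : cell d d') : cell (ki1 d) (ki1 d') :=
  G2 (E x y) d d' u.
Definition keta {x y : obj A} (a : hom x y) : cell a (ki1 (m1 K a)) := eta (E x y) a.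
Definition keps {x y : obj A} (d : hom (m0 K x) (m0 K y)) : cell (m1 K (ki1 d)) d := eps (E x y) d.
Definition full {x y : obj A} {a b : hom x y} (u : cell (m1 K a) (m1 K b)) : cell a b :=
  vcomp (inv2 (keta b)) (vcomp (ki2 u) (keta a)).

Lemma ki2id {x y : obj A} (d : hom (m0 K x) (m0 K y)) : ki2 (id2 d) = id2 (ki1 d).
Proof. apply G2id. Qed.
Lemma ki2v {x y : obj A} {d d' d'' : hom (m0 K x) (m0 K y)} (u : cell d d') (v : cell d' d'') :
  ki2 (vcomp v u) = vcomp (ki2 v) (ki2 u).
Proof. apply G2v. Qed.
Lemma ketanat {x y : obj A} {a a' : hom x y} (u : cell a a') :
  vcomp (keta a') u = vcomp (ki2 (m2 K u)) (keta a).
Proof. apply etanat. Qed.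
Lemma kepsnat {x y : obj A} {d d' : hom (m0 K x) (m0 K y)} (v : cell d d') :
  vcomp (keps d') (m2 K (ki2 v)) = vcomp v (keps d).
Proof. apply epsnat. Qed.

Lemma K_faith {x y : obj A} {a b : hom x y} (u v : cell a b) : m2 K u = m2 K v -> u = v.
Proof.
  intro H. apply (vcancl HA (keta b)). rewrite !ketanat, H. reflexivity.
Qed.
Lemma ki2_faith {x y : obj A} {d d' : hom (m0 K x) (m0 K y)} (u v : cell d d') : ki2 u = ki2 v -> u = v.
Proof.
  intro H. apply (vcancr HD (keps d)). rewrite <- !kepsnat, H. reflexivity.
Qed.
Lemma K_full {x y : obj A} {a b : hom x y} (u : cell (m1 K a) (m1 K b)) : m2 K (full u) = u.
Proof.
  apply ki2_faith. apply (vcancr HA (keta a)). rewrite <- ketanat. unfold full.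
  rewrite (vKr HA). reflexivity.
Qed.
Lemma KG2 {x y : obj A} {d d' : hom (m0 K x) (m0 K y)} (v : cell d d') :
  m2 K (ki2 v) = vcomp (inv2 (keps d')) (vcomp v (keps d)).
Proof. rewrite <- kepsnat, (vKl HD). reflexivity. Qed.
Lemma Kc2 {x y z : obj A} {g g' : hom y z} {f f' : hom x y} (b : cell g g') (a : cell f f') :
  m2 K (comp2 b a) = vcomp (mphi K g' f') (vcomp (comp2 (m2 K b) (m2 K a)) (inv2 (mphi K g f))).
Proof. rewrite (vassoc HD), <- (phinat HK), <- (vassoc HD), (vinvr HD), (vidr HD). reflexivity. Qed.
Lemma Kr2 {x y : obj A} {f f' : hom x y} (a : cell f f') :
  m2 K (rev2 a) = vcomp (mphiinv K f') (vcomp (rev2 (m2 K a)) (inv2 (mphiinv K f))).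
Proof. rewrite (vassoc HD), <- (phiinvnat HK), <- (vassoc HD), (vinvr HD), (vidr HD). reflexivity. Qed.
Lemma full_K {x y : obj A} {a b : hom x y} (u : cell a b) : full (m2 K u) = u.
Proof. apply K_faith. apply K_full. Qed.

Definition Kinv : MorData (@reidx D (obj A) (m0 K)) A :=
  @Build_MorData (@reidx D (obj A) (m0 K)) A (fun x => x)
    (fun x y d => ki1 d)
    (fun x y d d' u => ki2 u)
    (fun x y z g f => full (vcomp (inv2 (keps (comp1 g f)))
                        (vcomp (comp2 (keps g) (keps f)) (inv2 (mphi K (ki1 g) (ki1 f))))))
    (fun x => full (vcomp (inv2 (keps (id1 (m0 K x)))) (inv2 (mphi0 K x))))
    (fun x y f => full (vcomp (inv2 (keps (rev1 f))) (vcomp (rev2 (keps f)) (inv2 (mphiinv K (ki1 f)))))).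

Lemma Kinv_morphism : is_morphism Kinv.
Proof.
  unfold is_morphism; simpl. repeat split.
  - intros. apply ki2id.
  - intros. apply ki2v.
  - intros. apply K_faith. rewrite !(m2v HK), !K_full, Kc2, !KG2.
    vnorm HD. rewrite (vKr HD), (vKl HD).
    rwcr HD open_constr:(c2v HD _ (keps g') _ (keps f')). rewrite !(vKr HD), (c2v HD). vnorm HD. reflexivity.
  - intros. apply K_faith. rewrite !(m2v HK), !K_full, Kr2, !KG2.
    vnorm HD. rewrite (vKr HD), (vKl HD).
    rwcr HD open_constr:(r2v HD _ (keps f')). rewrite !(vKr HD), (r2v HD). vnorm HD. reflexivity.
  - intros. apply K_faith. rewrite !(m2v HK), !K_full, !Kc2, !K_full, !KG2, !(m2id HK).
    vnorm HD. rewrite (vKr HD), !(vKl HD).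
    rwcr HD open_constr:(c2v HD _ (keps (comp1 h g)) _ (keps f)). rewrite (vKr HD), (vidr HD), (c2vl' HD). vnorm HD.
    rwc HD (anat HD (keps h) (keps g) (keps f)).
    rwcr HD open_constr:(c2v HD _ (keps h) _ (keps (comp1 g f))). rewrite (vKr HD), (vidr HD), (c2vr' HD). vnorm HD.
    rewrite (passoc' HD HK). reflexivity.
  - intros. apply K_faith. rewrite !(m2v HK), !K_full, !Kc2, !K_full, !(m2id HK), KG2.
    vnorm HD. rewrite (vKr HD), !(vKl HD).
    rwcr HD open_constr:(c2v HD _ (keps f) _ (keps (id1 (m0 K X)))). rewrite (vKr HD), (vidr HD), (c2split HD). vnorm HD.
    rwcr HD (runat HD (keps f)). rewrite (vKl HD), (pru' HD HK). reflexivity.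
  - intros. apply K_faith. rewrite !(m2v HK), !K_full, !Kc2, !K_full, !(m2id HK), KG2.
    vnorm HD. rewrite (vKr HD), !(vKl HD).
    rwcr HD open_constr:(c2v HD _ (keps (id1 (m0 K Y))) _ (keps f)). rewrite (vKr HD), (vidr HD), (c2split' HD). vnorm HD.
    rwcr HD (lunat HD (keps f)). rewrite (vKl HD), (plu' HD HK). reflexivity.
  - intros. apply K_faith. rewrite !(m2v HK), !K_full, !Kc2, !K_full, !(m2id HK), KG2.
    vnorm HD. rewrite (vKr HD), !(vKl HD).
    rwcr HD open_constr:(c2v HD _ (keps (rev1 f)) _ (keps f)). rewrite (vKr HD), (vidr HD), (c2vl' HD). vnorm HD.
    rwcr HD (evnat HD (keps f)). rewrite (pev' HD HK). reflexivity.
  - intros. apply K_faith. rewrite !(m2v HK), !K_full, !Kc2, !K_full, !(m2id HK), KG2.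
    vnorm HD. rewrite (vKr HD), !(vKl HD).
    rwcr HD open_constr:(c2v HD _ (keps f) _ (keps (rev1 f))). rewrite (vKr HD), (vidr HD), (c2vr' HD). vnorm HD.
    rewrite (pcoev' HD HK). rewrite <- (coevnat HD (keps f)). vnorm HD. reflexivity.
Qed.
End Kinv.

Lemma sig_pk {B : BgData} {X Y : obj B} (c : hom X Y) (x y : hom X Y) (p : cell x c) (q : cell y c) :
  existT (fun z => cell z c) x p = existT (fun z => cell z c) y q -> pk p = pk q.
Proof.
  intro H. change ((fun s : {z : hom X Y & cell z c} => pk (projT2 s)) (existT _ x p) =
                   (fun s : {z : hom X Y & cell z c} => pk (projT2 s)) (existT _ y q)).
  rewrite H. reflexivity.
Qed.

Definition castr {B : BgData} {X Y : obj B} {f g g' : hom X Y} (e : g = g') (a : cell f g) : cell f g' :=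
  match e in _ = g0 return cell f g0 with eq_refl => a end.
Lemma pk_castr {B : BgData} {X Y : obj B} {f g g' : hom X Y} (e : g = g') (a : cell f g) : pk (castr e a) = pk a.
Proof. destruct e. reflexivity. Qed.

Section Main.
Context {A B C D0 : BgData} (HA : BgAxioms A) (HB : BgAxioms B) (HC : BgAxioms C) (HD : BgAxioms D0)
  {F : MorData A B} {K0 : MorData A D0} {G : MorData B C}
  (HF : is_morphism F) (HK : is_morphism K0) (HG : is_morphism G)
  (Kinj : forall x y (f g : hom x y), m1 K0 f = m1 K0 g -> f = g)
  (E : forall x y, EqD K0 x y)
  (Gfib : forall (X Y : obj B) (a' : hom X Y) (b : hom (m0 G X) (m0 G Y)) (beta : cell b (m1 G a')),
     exists (a : hom X Y) (alpha : cell a a'),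
       existT (fun x => cell x (m1 G a')) (m1 G a) (m2 G alpha)
       = existT (fun x => cell x (m1 G a')) b beta).

Let Dk := @reidx D0 (obj A) (m0 K0).
Let K := reK K0.
Let HDk : BgAxioms Dk := reidx_ax D0 HD (obj A) (m0 K0).

Definition zeta {x y : obj A} (a : hom x y) : cell a (ki1 E (m1 K0 a)) := full E (inv2 (keps E (m1 K0 a))).

Lemma main_k (H : MorData Dk C) (HH : is_morphism H) (Hcomm : mcomp G F = mcomp H K) :
  exists L : MorData Dk B, is_morphism L /\ mcomp L K = F /\ mcomp G L = H.
Proof.
  destruct H as [h0 h1 h2 h3 h4 h5].
  pose proof (f_equal (@m0 _ _) Hcomm) as E0. simpl in E0.
  change ((fun X => m0 G (m0 F X)) = h0) in E0. subst h0.
  assert (c1 : forall x y (a : hom x y), m1 G (m1 F a) = h1 x y (m1 K0 a)).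
  { intros. pose proof (f_equal (fun r => pk1 (m1 r a)) Hcomm) as E1. simpl in E1.
    apply inj_pair2 in E1. exact E1. }
  assert (c2 : forall x y (a b : hom x y) (u : cell a b), pk (m2 G (m2 F u)) = pk (h2 x y _ _ (m2 K0 u))).
  { intros. exact (f_equal (fun r => pk (m2 r u)) Hcomm). }
  assert (c3 : forall x y z (g : hom y z) (f : hom x y),
            pk (vcomp (m2 G (mphi F g f)) (mphi G (m1 F g) (m1 F f)))
            = pk (vcomp (h2 _ _ _ _ (mphi K0 g f)) (h3 _ _ _ (m1 K0 g) (m1 K0 f)))).
  { intros. exact (f_equal (fun r => pk (mphi r g f)) Hcomm). }
  assert (c4 : forall x, pk (vcomp (m2 G (mphi0 F x)) (mphi0 G (m0 F x)))
                       = pk (vcomp (h2 _ _ _ _ (mphi0 K0 x)) (h4 x))).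
  { intros. exact (f_equal (fun r => pk (mphi0 r x)) Hcomm). }
  assert (c5 : forall x y (f : hom x y), pk (vcomp (m2 G (mphiinv F f)) (mphiinv G (m1 F f)))
                       = pk (vcomp (h2 _ _ _ _ (mphiinv K0 f)) (h5 _ _ (m1 K0 f)))).
  { intros. exact (f_equal (fun r => pk (mphiinv r f)) Hcomm). }
  assert (hv : forall (X Y : obj Dk) (f g h : hom X Y) (a : cell f g) (b : cell g h),
            vcomp (h2 X Y g h b) (h2 X Y f g a) = h2 X Y f h (vcomp b a)) by (intros; apply (m2vs HH)).
  assert (hinv : forall (X Y : obj Dk) (f g : hom X Y) (a : cell f g),
            h2 X Y g f (inv2 a) = inv2 (h2 X Y f g a)) by (intros; apply (m2inv HDk HC HH)).
  assert (hnat : forall (X Y Z : obj Dk) (g g' : hom Y Z) (f f' : hom X Y) (b : cell g g') (a : cell f f'),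
     vcomp (h2 _ _ _ _ (comp2 b a)) (h3 _ _ _ g f) = vcomp (h3 _ _ _ g' f') (comp2 (h2 _ _ _ _ b) (h2 _ _ _ _ a)))
    by (intros; apply (phinat HH)).
  assert (hrnat : forall (X Y : obj Dk) (f f' : hom X Y) (a : cell f f'),
     vcomp (h2 _ _ _ _ (rev2 a)) (h5 _ _ f) = vcomp (h5 _ _ f') (rev2 (h2 _ _ _ _ a)))
    by (intros; apply (phiinvnat HH)).
  assert (hvc : forall (X Y : obj Dk) (f g h : hom X Y) (a : cell f g) (b : cell g h) (k : hom (m0 G (m0 F X)) (m0 G (m0 F Y))) (x : cell k (h1 X Y f)),
            vcomp (h2 X Y g h b) (vcomp (h2 X Y f g a) x) = vcomp (h2 X Y f h (vcomp b a)) x).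
  { intros. rewrite (vassoc HC), hv. reflexivity. }
  assert (hid : forall (X Y : obj Dk) (f : hom X Y), h2 X Y f f (id2 f) = id2 (h1 X Y f))
    by (intros; apply (m2id HH)).
  simpl in hv, hinv, hnat, hrnat, hvc, hid.
  pose (T := fun x y (d : hom (m0 K0 x) (m0 K0 y)) => {l : hom (m0 F x) (m0 F y) & cell l (m1 F (ki1 E d))}).
  pose (can := fun x y (a : hom x y) => (existT _ (m1 F a) (m2 F (zeta a)) : T x y (m1 K0 a))).
  assert (Sex : forall x y (d : hom (m0 K0 x) (m0 K0 y)), {p : T x y d |
     m1 G (projT1 p) = h1 x y d /\ pk (m2 G (projT2 p)) = pk (h2 _ _ _ _ (inv2 (keps E d))) /\
     (forall a (e : m1 K0 a = d), p = eq_rect _ (T x y) (can x y a) d e)}).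
  { intros x y d. apply constructive_indefinite_description.
    destruct (classic (exists a, m1 K0 a = d)) as [[a0 e0]|Hn].
    - subst d. exists (can x y a0). split; [|split].
      + simpl. apply c1.
      + simpl. rewrite c2. unfold zeta. rewrite (K_full HA HD E). reflexivity.
      + intros a e. pose proof (Kinj _ _ _ _ e) as ea; subst a. rewrite (UIP_refl _ _ e). reflexivity.
    - destruct (Gfib (m0 F x) (m0 F y) (m1 F (ki1 E d)) (h1 x y d)
                 (castr (eq_sym (c1 _ _ (ki1 E d))) (h2 _ _ _ _ (inv2 (keps E d))))) as [a [al Hal]].
      exists (existT _ a al). split; [|split].
      + simpl. exact (f_equal (@projT1 _ _) Hal).
      + simpl. rewrite (sig_pk _ _ _ _ _ Hal), pk_castr. reflexivity.
      + intros a' e. exfalso; apply Hn; exists a'; exact e. }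
  pose (L1 := fun x y d => projT1 (proj1_sig (Sex x y d))).
  pose (th := fun x y d => projT2 (proj1_sig (Sex x y d))).
  assert (Scan : forall x y (a : hom x y), proj1_sig (Sex x y (m1 K0 a)) = can x y a).
  { intros. destruct (proj2_sig (Sex x y (m1 K0 a))) as [_ [_ H3]]. apply (H3 a eq_refl). }
  assert (SG1 : forall x y d, m1 G (L1 x y d) = h1 x y d).
  { intros. apply (proj2_sig (Sex x y d)). }
  assert (SG2 : forall x y d, pk (m2 G (th x y d)) = pk (h2 _ _ _ _ (inv2 (keps E d)))).
  { intros. apply (proj2_sig (Sex x y d)). }

  pose (M := mcomp F (Kinv E)).
  exists (@conjM Dk B M L1 th). split; [|split].
  - apply (conj_morphism HB). apply (comp_morphism HA HB). apply (Kinv_morphism HA HD HK). exact HF.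
  - apply mor_eq_pk; simpl.
    + reflexivity.
    + intros. unfold L1. rewrite (Scan X Y f). reflexivity.
    + intros. unfold th, L1. rewrite (Scan X Y f), (Scan X Y g). simpl.
      apply f_equal. rewrite <- (m2inv HA HB HF), <- !(m2v HF). apply f_equal.
      apply (K_faith HA E). rewrite !(m2v HK), (m2inv HA HD HK). unfold zeta.
      rewrite !(K_full HA HD E), (KG2 HD E), (inv2_inv HD). vnorm HD. rewrite (vKr HD), (vinvr HD), (vidr HD).
      reflexivity.
    + intros. unfold th, L1. rewrite (Scan X Y f), (Scan Y Z g), (Scan X Z (comp1 g f)). simpl.
      apply f_equal. vnorm HB. rewrite (vKr HB). rwc HB (phinat' HF (zeta g) (zeta f)).
      rewrite <- (m2inv HA HB HF). gmerge HB HF. gmerge HB HF. gmerge HB HF.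
      transitivity (vcomp (m2 F (id2 (comp1 g f))) (mphi F g f)).
      2: { rewrite (m2id HF), (vidl HB). reflexivity. }
      apply (f_equal (fun z => vcomp (m2 F z) (mphi F g f))).
      apply (K_faith HA E). rewrite !(m2v HK), (m2inv HA HD HK), (m2id HK). unfold zeta.
      rewrite (Kc2 HD HK), !(K_full HA HD E), (KG2 HD E), (inv2_inv HD). vnorm HD.
      rewrite !(vKr HD), (vKl HD), (c2inv HD), (vKr HD), (vinvr HD). reflexivity.
    + intros. unfold th, L1. rewrite (Scan X X (id1 X)). simpl.
      apply f_equal. vnorm HB. rewrite (vKr HB).
      rewrite <- (m2inv HA HB HF). gmerge HB HF. gmerge HB HF.
      transitivity (vcomp (m2 F (id2 (id1 X))) (mphi0 F X)).
      2: { rewrite (m2id HF), (vidl HB). reflexivity. }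
      apply (f_equal (fun z => vcomp (m2 F z) (mphi0 F X))).
      apply (K_faith HA E). rewrite !(m2v HK), (m2inv HA HD HK), (m2id HK). unfold zeta.
      rewrite !(K_full HA HD E), (KG2 HD E), (inv2_inv HD). vnorm HD.
      rewrite !(vKr HD), (vinvr HD). reflexivity.
    + intros. unfold th, L1. rewrite (Scan X Y f), (Scan Y X (rev1 f)). simpl.
      apply f_equal. vnorm HB. rewrite (vKr HB). rwc HB (phiinvnat' HF (zeta f)).
      rewrite <- (m2inv HA HB HF). gmerge HB HF. gmerge HB HF. gmerge HB HF.
      transitivity (vcomp (m2 F (id2 (rev1 f))) (mphiinv F f)).
      2: { rewrite (m2id HF), (vidl HB). reflexivity. }
      apply (f_equal (fun z => vcomp (m2 F z) (mphiinv F f))).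
      apply (K_faith HA E). rewrite !(m2v HK), (m2inv HA HD HK), (m2id HK). unfold zeta.
      rewrite (Kr2 HD HK), !(K_full HA HD E), (KG2 HD E), (inv2_inv HD). vnorm HD.
      rewrite !(vKr HD), (vKl HD), (r2inv HD), (vKr HD), (vinvr HD). reflexivity.
  - apply mor_eq_pk; simpl.
    + reflexivity.
    + intros. exact (f_equal pk1 (SG1 X Y f)).
    + intros. rewrite !(m2v HG), (m2inv HB HC HG).
      transitivity (pk (vcomp (inv2 (h2 _ _ _ _ (inv2 (keps E g)))) (vcomp (h2 _ _ _ _ (m2 K0 (ki2 E a)))
                          (h2 _ _ _ _ (inv2 (keps E f)))))).
      { apply pk_v; [apply pk_v|apply pk_inv2]; [apply SG2|apply c2|apply SG2]. }
      apply f_equal. rewrite <- hinv, !hv. apply f_equal.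
      simpl. rewrite (KG2 HD E), (inv2_inv HD). vnorm HD. rewrite (vKr HD), (vinvr HD), (vidr HD). reflexivity.
    + intros. unfold L1, th. rewrite !(m2v HG), (m2inv HB HC HG). vnorm HC. rewrite (phinat HG).
      rewrite (vassoc HC _ (mphi G _ _) (m2 G (mphi F _ _))).
      eapply eq_trans; [repeat (first [apply SG2 | apply c3 | apply c2 | apply pk_v | apply pk_inv2 | apply pk_c2])|].
      apply f_equal. simpl. rewrite <- hinv. vnorm HC. rewrite !hvc, (K_full HA HD E), (inv2_inv HD).
      vnorm HD. rewrite (vKr HD), (vinvl HD), (vidr HD).
      rwc HC open_constr:(hnat _ _ _ _ _ _ _ _ _). rewrite !hinv, <- (c2v HC), !(vinvr HC), (c2id HC), (vidr HC).
      reflexivity.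
    + intros. unfold L1, th. rewrite !(m2v HG), (m2inv HB HC HG). vnorm HC.
      eapply eq_trans; [repeat (first [apply SG2 | apply c4 | apply c2 | apply pk_v | apply pk_inv2 | apply pk_c2])|].
      apply f_equal. simpl. rewrite <- hinv. rewrite !hvc, (K_full HA HD E), (inv2_inv HD).
      vnorm HD. rewrite (vKr HD), (vinvl HD), hid, (vidl HC). reflexivity.
    + intros. unfold L1, th. rewrite !(m2v HG), (m2inv HB HC HG). vnorm HC. rewrite (phiinvnat HG).
      rewrite (vassoc HC _ (mphiinv G _) (m2 G (mphiinv F _))).
      eapply eq_trans; [repeat (first [apply SG2 | apply c5 | apply c2 | apply pk_v | apply pk_inv2 | apply pk_rev2])|].
      apply f_equal. simpl. rewrite <- hinv. vnorm HC. rewrite !hvc, (K_full HA HD E), (inv2_inv HD).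
      vnorm HD. rewrite (vKr HD), (vinvl HD), (vidr HD).
      rwc HC open_constr:(hrnat _ _ _ _ _). rewrite !hinv, <- (r2v HC), !(vinvr HC), (r2id HC), (vidr HC).
      reflexivity.
Qed.
End Main.

Section Cast.
Context {D : BgData} (HD : BgAxioms D).

Definition castH {X Y X' Y' : obj D} (eX : X = X') (eY : Y = Y') (f : hom X Y) : hom X' Y'.
Proof. destruct eX, eY. exact f. Defined.
Definition castC {X Y X' Y' : obj D} (eX : X = X') (eY : Y = Y') {f g : hom X Y} (u : cell f g) :
  cell (castH eX eY f) (castH eX eY g).
Proof. destruct eX, eY. exact u. Defined.
Definition castP {X Y Z X' Y' Z' : obj D} (eX : X = X') (eY : Y = Y') (eZ : Z = Z') (g : hom Y Z) (f : hom X Y) :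
  cell (comp1 (castH eY eZ g) (castH eX eY f)) (castH eX eZ (comp1 g f)).
Proof. destruct eX, eY, eZ. exact (id2 _). Defined.
Definition castP0 {X X' : obj D} (eX : X = X') : cell (id1 X') (castH eX eX (id1 X)).
Proof. destruct eX. exact (id2 _). Defined.
Definition castPI {X Y X' Y' : obj D} (eX : X = X') (eY : Y = Y') (f : hom X Y) :
  cell (rev1 (castH eX eY f)) (castH eY eX (rev1 f)).
Proof. destruct eX, eY. exact (id2 _). Defined.

Lemma cJ1 {X Y X' Y' : obj D} (eX : X = X') (eY : Y = Y') (f : hom X Y) : castC eX eY (id2 f) = id2 _.
Proof. destruct eX, eY. reflexivity. Qed.
Lemma cJ2 {X Y X' Y' : obj D} (eX : X = X') (eY : Y = Y') (f g h : hom X Y) (a : cell f g) (b : cell g h) :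
  castC eX eY (vcomp b a) = vcomp (castC eX eY b) (castC eX eY a).
Proof. destruct eX, eY. reflexivity. Qed.
Lemma cJ3 {X Y Z X' Y' Z' : obj D} (eX : X = X') (eY : Y = Y') (eZ : Z = Z') (g g' : hom Y Z) (f f' : hom X Y)
  (b : cell g g') (a : cell f f') :
  vcomp (castC eX eZ (comp2 b a)) (castP eX eY eZ g f) = vcomp (castP eX eY eZ g' f') (comp2 (castC eY eZ b) (castC eX eY a)).
Proof. destruct eX, eY, eZ. simpl. rewrite (vidr HD), (vidl HD). reflexivity. Qed.
Lemma cJ4 {X Y X' Y' : obj D} (eX : X = X') (eY : Y = Y') (f f' : hom X Y) (a : cell f f') :
  vcomp (castC eY eX (rev2 a)) (castPI eX eY f) = vcomp (castPI eX eY f') (rev2 (castC eX eY a)).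
Proof. destruct eX, eY. simpl. rewrite (vidr HD), (vidl HD). reflexivity. Qed.
Lemma cJ5 {W X Y Z W' X' Y' Z' : obj D} (eW : W = W') (eX : X = X') (eY : Y = Y') (eZ : Z = Z')
  (h : hom Y Z) (g : hom X Y) (f : hom W X) :
  vcomp (castC eW eZ (assoc h g f)) (vcomp (castP eW eX eZ (comp1 h g) f) (comp2 (castP eX eY eZ h g) (id2 (castH eW eX f))))
  = vcomp (castP eW eY eZ h (comp1 g f)) (vcomp (comp2 (id2 (castH eY eZ h)) (castP eW eX eY g f))
       (assoc (castH eY eZ h) (castH eX eY g) (castH eW eX f))).
Proof. destruct eW, eX, eY, eZ. simpl. rewrite !(c2id HD), !(vidr HD), !(vidl HD). reflexivity. Qed.
Lemma cJ6 {X Y X' Y' : obj D} (eX : X = X') (eY : Y = Y') (f : hom X Y) :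
  vcomp (castC eX eY (ru f)) (vcomp (castP eX eX eY f (id1 X)) (comp2 (id2 (castH eX eY f)) (castP0 eX))) = ru (castH eX eY f).
Proof. destruct eX, eY. simpl. rewrite !(c2id HD), !(vidr HD). reflexivity. Qed.
Lemma cJ7 {X Y X' Y' : obj D} (eX : X = X') (eY : Y = Y') (f : hom X Y) :
  vcomp (castC eX eY (lu f)) (vcomp (castP eX eY eY (id1 Y) f) (comp2 (castP0 eY) (id2 (castH eX eY f)))) = lu (castH eX eY f).
Proof. destruct eX, eY. simpl. rewrite !(c2id HD), !(vidr HD). reflexivity. Qed.
Lemma cJ8 {X Y X' Y' : obj D} (eX : X = X') (eY : Y = Y') (f : hom X Y) :
  vcomp (castC eX eX (ev f)) (vcomp (castP eX eY eX (rev1 f) f) (comp2 (castPI eX eY f) (id2 (castH eX eY f))))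
  = vcomp (castP0 eX) (ev (castH eX eY f)).
Proof. destruct eX, eY. simpl. rewrite !(c2id HD), !(vidr HD), (vidl HD). reflexivity. Qed.
Lemma cJ9 {X Y X' Y' : obj D} (eX : X = X') (eY : Y = Y') (f : hom X Y) :
  vcomp (castC eY eY (coev f)) (castP0 eY)
  = vcomp (castP eY eX eY f (rev1 f)) (vcomp (comp2 (id2 (castH eX eY f)) (castPI eX eY f)) (coev (castH eX eY f))).
Proof. destruct eX, eY. simpl. rewrite !(c2id HD), !(vidr HD), !(vidl HD). reflexivity. Qed.
End Cast.

Definition Jmor {D : BgData} {T : Type} (k : T -> obj D) (kinv : obj D -> T) (ek : forall X, X = k (kinv X)) :
  MorData D (@reidx D T k) :=
  @Build_MorData D (@reidx D T k) kinv
    (fun X Y d => castH (ek X) (ek Y) d)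
    (fun X Y f g u => castC (ek X) (ek Y) u)
    (fun X Y Z g f => castP (ek X) (ek Y) (ek Z) g f)
    (fun X => castP0 (ek X))
    (fun X Y f => castPI (ek X) (ek Y) f).

Lemma Jmor_morphism {D : BgData} (HD : BgAxioms D) {T : Type} (k : T -> obj D) (kinv : obj D -> T)
  (ek : forall X, X = k (kinv X)) : is_morphism (Jmor k kinv ek).
Proof.
  unfold is_morphism; simpl; repeat split; intros.
  - apply cJ1.
  - apply cJ2.
  - apply (cJ3 HD).
  - apply (cJ4 HD).
  - apply (cJ5 HD).
  - apply (cJ6 HD).
  - apply (cJ7 HD).
  - apply (cJ8 HD).
  - apply (cJ9 HD).
Qed.

Definition reH {D C : BgData} {T : Type} (k : T -> obj D) (H : MorData D C) : MorData (@reidx D T k) C :=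
  @Build_MorData (@reidx D T k) C (fun x => m0 H (k x))
    (fun x y d => m1 H d)
    (fun x y f g u => m2 H u)
    (fun x y z g f => mphi H g f)
    (fun x => mphi0 H (k x))
    (fun x y f => mphiinv H f).

Lemma reH_morphism {D C : BgData} {T : Type} (k : T -> obj D) (H : MorData D C) :
  is_morphism H -> is_morphism (reH k H).
Proof.
  intro HH. unfold is_morphism in *; simpl.
  destruct HH as [h1 [h2 [h3 [h4 [h5 [h6 [h7 [h8 h9]]]]]]]].
  repeat split; intros; simpl; auto.
Qed.

Lemma JK_eq {A D : BgData} (HD : BgAxioms D) (K : MorData A D) (kinv : obj D -> obj A)
  (ek : forall X, X = m0 K (kinv X)) (ek2 : forall x, kinv (m0 K x) = x) :
  mcomp (Jmor (m0 K) kinv ek) K = reK K.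
Proof.
  apply mor_eq_pk; simpl.
  - apply ek2.
  - intros X Y f. generalize (ek (m0 K X)) (ek (m0 K Y)). rewrite (ek2 X), (ek2 Y). intros e1 e2.
    rewrite (UIP_refl _ _ e1), (UIP_refl _ _ e2). reflexivity.
  - intros X Y f g a. generalize (ek (m0 K X)) (ek (m0 K Y)). rewrite (ek2 X), (ek2 Y). intros e1 e2.
    rewrite (UIP_refl _ _ e1), (UIP_refl _ _ e2). reflexivity.
  - intros X Y Z g f. generalize (ek (m0 K X)) (ek (m0 K Y)) (ek (m0 K Z)). rewrite (ek2 X), (ek2 Y), (ek2 Z).
    intros e1 e2 e3. rewrite (UIP_refl _ _ e1), (UIP_refl _ _ e2), (UIP_refl _ _ e3). simpl.
    rewrite (vidr HD). reflexivity.
  - intros X. generalize (ek (m0 K X)). rewrite (ek2 X). intros e1.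
    rewrite (UIP_refl _ _ e1). simpl. rewrite (vidr HD). reflexivity.
  - intros X Y f. generalize (ek (m0 K X)) (ek (m0 K Y)). rewrite (ek2 X), (ek2 Y). intros e1 e2.
    rewrite (UIP_refl _ _ e1), (UIP_refl _ _ e2). simpl. rewrite (vidr HD). reflexivity.
Qed.

Section HJ.
Context {D C : BgData} (HC : BgAxioms C) {H : MorData D C} (HH : is_morphism H).
Lemma pkH1 {X Y X' Y' : obj D} (eX : X = X') (eY : Y = Y') (d : hom X Y) :
  pk1 (m1 H (castH eX eY d)) = pk1 (m1 H d).
Proof. destruct eX, eY. reflexivity. Qed.
Lemma pkH2 {X Y X' Y' : obj D} (eX : X = X') (eY : Y = Y') (f g : hom X Y) (u : cell f g) :
  pk (m2 H (castC eX eY u)) = pk (m2 H u).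
Proof. destruct eX, eY. reflexivity. Qed.
Lemma pkH3 {X Y Z X' Y' Z' : obj D} (eX : X = X') (eY : Y = Y') (eZ : Z = Z') (g : hom Y Z) (f : hom X Y) :
  pk (vcomp (m2 H (castP eX eY eZ g f)) (mphi H (castH eY eZ g) (castH eX eY f))) = pk (mphi H g f).
Proof. destruct eX, eY, eZ. simpl. rewrite (m2id HH), (vidl HC). reflexivity. Qed.
Lemma pkH4 {X X' : obj D} (eX : X = X') :
  pk (vcomp (m2 H (castP0 eX)) (mphi0 H X')) = pk (mphi0 H X).
Proof. destruct eX. simpl. rewrite (m2id HH), (vidl HC). reflexivity. Qed.
Lemma pkH5 {X Y X' Y' : obj D} (eX : X = X') (eY : Y = Y') (f : hom X Y) :
  pk (vcomp (m2 H (castPI eX eY f)) (mphiinv H (castH eX eY f))) = pk (mphiinv H f).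
Proof. destruct eX, eY. simpl. rewrite (m2id HH), (vidl HC). reflexivity. Qed.
End HJ.

Lemma HJ_eq {D C : BgData} (HC : BgAxioms C) {T : Type} (k : T -> obj D) (kinv : obj D -> T)
  (ek : forall X, X = k (kinv X)) (H : MorData D C) (HH : is_morphism H) :
  mcomp (reH k H) (Jmor k kinv ek) = H.
Proof.
  apply mor_eq_pk; simpl; intros.
  - symmetry. apply f_equal. apply ek.
  - apply pkH1.
  - apply pkH2.
  - apply (pkH3 HC HH).
  - apply (pkH4 HC HH).
  - apply (pkH5 HC HH).
Qed.

Theorem lemma5p5 (A B C D : Bigroupoid)
  (F : MorData A B) (K : MorData A D) (G : MorData B C) (H : MorData D C)
  (HF : is_morphism F) (HK : is_morphism K) (HG : is_morphism G) (HH : is_morphism H)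
  (Hcomm : mcomp G F = mcomp H K)
  (Ktc : is_trivial_cofibration K) (Ksurj : surjective_on_0cells K)
  (Gfib : is_fibration G) :
  exists L : MorData D B,
    is_morphism L /\ mcomp L K = F /\ mcomp G L = H.
Proof.
  destruct A as [A HA], B as [B HB], C as [C HC], D as [D HD]. simpl in *.
  destruct Ktc as [[Kinj0 Kinj1] [_ Kweq]].
  pose (kinv := fun X => proj1_sig (constructive_indefinite_description _ (Ksurj X))).
  assert (ek : forall X, X = m0 K (kinv X)).
  { intro X. unfold kinv. destruct (constructive_indefinite_description _ (Ksurj X)). simpl. auto. }
  assert (ek2 : forall x, kinv (m0 K x) = x).
  { intro x. apply Kinj0. symmetry. apply ek. }
  pose (E := fun x y => get_EqD K x y (Kweq x y)).
  destruct (main_k HA HB HC HD HF HK HG Kinj1 E (proj2 Gfib) (reH (m0 K) H) (reH_morphism _ _ HH) Hcomm)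
    as [L' [HL' [HL1 HL2]]].
  exists (mcomp L' (Jmor (m0 K) kinv ek)). split; [|split].
  - apply (comp_morphism (reidx_ax D HD (obj A) (m0 K)) HB). apply (Jmor_morphism HD). exact HL'.
  - rewrite (mcomp_assoc HB _ _ _ HL'). rewrite (JK_eq HD K kinv ek ek2). exact HL1.
  - rewrite <- (mcomp_assoc HC _ _ _ HG). rewrite HL2. apply (HJ_eq HC). exact HH.
Qed.
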